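(* Let $(\Xi,d_\Xi)$ be a metric space, let $\{P^\nu\}_{\nu\in\mathbb{N}}$ be probabilities on $(\Xi,\mathcal{B}(\Xi))$ converging weakly to a probability $P$, and let $\{h^\nu\}_{\nu\in\mathbb{N}}$ be measurable $\overline{\mathbb{R}}$-valued functions on $\Xi$ such that $$\liminf_{K\to+\infty}\ \liminf_{\nu\to+\infty}\mathbb{E}^{P^\nu}\big[h^\nu(\xi)\,\mathbb{1}\{\xi:h^\nu(\xi)\le -K\}\big]=0.$$ Then $$\liminf_{\nu\to+\infty}\mathbb{E}^{P^\nu}\big[h^\nu(\xi)\big]\ \ge\ \mathbb{E}^{P}\Big[\liminf_{(\nu,\zeta)\to(+\infty,\xi)}h^\nu(\zeta)\Big].$$
   Context: $\overline{\mathbb{R}}=\mathbb{R}\cup\{-\infty,+\infty\}$; $\mathcal{B}(\Xi)$ is the Borel $\sigma$-algebra; weak convergence means $\int\varphi\,dP^\nu\to\int\varphi\,dP$ for all bounded continuous $\varphi$. For a probability $\mu$ and measurable $\overline{\mathbb{R}}$-valued $g$, $\mathbb{E}^\mu[g]:=\int g_+\,d\mu-\int g_-\,d\mu$ with conventions $+\infty-\alpha=+\infty$ for all $\alpha\in\overline{\mathbb{R}}$ (in particular the expectation equals $+\infty$ when both $\int g_+$ and $\int g_-$ are $+\infty$) and $\beta-(+\infty)=-\infty$ for $\beta\in\mathbb{R}$. $\mathbb{1}\{B\}$ is the indicator of $B$. $\liminf_{(\nu,\zeta)\to(+\infty,\xi)}h^\nu(\zeta):=\lim_{\delta\downarrow0}\lim_{N\to\infty}\inf\{h^\nu(\zeta):\nu\ge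 N,\ d_\Xi(\zeta,\xi)<\delta\}$. *)

(* Defs.v *)
From HB Require Import structures.
From mathcomp Require Import all_boot all_order all_algebra.
From mathcomp Require Import all_classical all_reals all_analysis.
From mathcomp Require Import measurable_realfun.
Set Implicit Arguments. Unset Strict Implicit. Unset Printing Implicit Defensive.
Import Order.TTheory GRing.Theory Num.Theory.
Import numFieldNormedType.Exports.
Local Open Scope classical_set_scope.
Local Open Scope ring_scope.
Local Open Scope ereal_scope.

Definition borelType {R : realType} (T : pseudoPMetricType R)
  : measurableType (sigma_display (@open T)) :=
  g_sigma_algebraType (@open T).

(* Expectation with the paper's convention:
   E[g] = int g_+ - int g_-, with +oo - a = +oo for all a. *)
Definition Eexp {d} {T : measurableType d} {R : realType}
  (mu : {measure set T -> \bar R}) (g : T -> \bar R) : \bar R :=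
  let a := \int[mu]_x (g ^\+) x in
  let b := \int[mu]_x (g ^\-) x in
  if a == +oo then +oo else a - b.

(* liminf_{(nu,zeta) -> (+oo, xi)} h^nu(zeta)
   := lim_{delta -> 0+} lim_{N -> oo} inf { h^nu(zeta) : nu >= N, d(zeta,xi) < delta } *)
Definition joint_liminf {R : realType} {T : pseudoMetricType R}
  (h : nat -> T -> \bar R) (xi : T) : \bar R :=
  lim ((fun delta : R =>
          lim ((fun N : nat =>
                  ereal_inf [set h p.1 p.2 | p in
                     [set p : nat * T | (N <= p.1)%N /\ ball xi delta p.2]]) @ \oo))
       @ (0:R)^'+).

(* Main.v *)
Require Import Defs.
From HB Require Import structures.
From mathcomp Require Import all_boot all_order all_algebra.
From mathcomp Require Import all_classical all_reals all_analysis.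
From mathcomp Require Import measurable_realfun.
From mathcomp Require Import ring lra.
Import Order.TTheory GRing.Theory Num.Theory.
Import numFieldNormedType.Exports.
Local Open Scope classical_set_scope.
Local Open Scope ring_scope.
Local Open Scope ereal_scope.


Section Aux.
Context {R : realType}.

Lemma lee_real (x y : \bar R) :
  (forall r : R, r%:E < x -> r%:E <= y) -> x <= y.
Proof.
case: x => [x| |] H; case: y H => [y| |] H //; rewrite ?leey ?leNye //.
- rewrite lee_fin leNgt; apply/negP => yx.
  have [h1 h2] := midf_lt yx.
  have := H ((y + x) / 2)%R; rewrite lte_fin => /(_ h2); rewrite lee_fin => h3.
  by move: h1; rewrite ltNge h3.
- have := H (x - 1)%R; rewrite lte_fin ltrBlDr ltrDl ltr01 => /(_ isT).
  by rewrite leeNy_eq.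
- have := H (y + 1)%R; rewrite ltry => /(_ isT); rewrite lee_fin.
  by rewrite leNgt ltrDl ltr01.
- by have := H 0%R (ltry _).
Qed.

Lemma le_int_nm d (T : measurableType d) (mu : {measure set T -> \bar R})
  (f g : T -> \bar R) : (forall x, 0 <= f x) -> (forall x, f x <= g x) ->
  \int[mu]_x f x <= \int[mu]_x g x.
Proof.
move=> f0 fg; have g0 x : 0 <= g x by rewrite (le_trans (f0 x)).
rewrite !ge0_integralTE //=; apply: ereal_sup_le => _ [h hf <-].
by exists h => // x; exact: le_trans (hf x) (fg x).
Qed.

Lemma le_limn_einf_near (u v : (\bar R)^nat) :
  (\forall n \near \oo, u n <= v n) -> limn_einf u <= limn_einf v.
Proof.
move=> [N _ HN]; rewrite !limn_einf_lim; apply: lee_lim.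
- exact: is_cvg_einfs.
- exact: is_cvg_einfs.
exists N => // n /= Nn; apply: le_ereal_inf_tmp => _ [k /= nk <-].
apply: le_trans (HN k _); last by rewrite /= (leq_trans Nn nk).
by apply: ereal_inf_lbound; exists k.
Qed.

End Aux.

Definition Gh {R : realType} {T : pseudoMetricType R} (h : nat -> T -> \bar R)
  (N : nat) (d : R) (x : T) : \bar R :=
  ereal_inf [set h p.1 p.2 | p in
     [set p : nat * T | (N <= p.1)%N /\ ball x d p.2]].

Section GhLemmas.
Context {R : realType} {T : pseudoMetricType R} (h : nat -> T -> \bar R).

Lemma Gh_mono N N' d d' x : (N <= N')%N -> (d' <= d)%R ->
  Gh h N d x <= Gh h N' d' x.
Proof.
move=> NN dd; apply: le_ereal_inf => _ [p [Np bp] <-]; exists p => //.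
by split; [exact: leq_trans NN Np | exact: le_ball dd _ bp].
Qed.

Lemma Gh_le_h N d x n : (0 < d)%R -> (N <= n)%N -> Gh h N d x <= h n x.
Proof.
by move=> d0 Nn; apply: ereal_inf_lbound; exists (n, x) => //; split => //=;
  exact: ballxx.
Qed.

Lemma jl_le_S x (s : nat -> R)
  (hs : forall d, (0 < d)%R -> exists M, forall m, (M <= m)%N -> (s m <= d)%R) :
  joint_liminf h x <= ereal_sup (range (fun m => Gh h m (s m) x)).
Proof.
set S := ereal_sup _.
have innerE d : lim ((fun N => Gh h N d x) @ \oo) =
    ereal_sup (range (fun N => Gh h N d x)).
  apply: cvg_lim => //; apply: ereal_nondecreasing_cvgn => a b ab.
  exact: Gh_mono.
have Fle d : (0 < d)%R -> ereal_sup (range (fun N => Gh h N d x)) <= S.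
  move=> d0; apply: ge_ereal_sup => _ [N _ <-]; have [M HM] := hs d d0.
  apply: (@le_trans _ _ (Gh h (maxn N M) (s (maxn N M)) x)).
    by apply: Gh_mono; [exact: leq_maxl | apply: HM; exact: leq_maxr].
  by apply: ereal_sup_ubound; exists (maxn N M).
rewrite /joint_liminf; apply: lime_le.
  apply/cvg_ex; eexists.
  apply: (@nonincreasing_at_right_cvge _ _ _ (+oo%O)) => //.
  move=> d1 d2 _ _ d12; rewrite !innerE.
  apply: ge_ereal_sup => _ [N _ <-].
  apply: (@le_trans _ _ (Gh h N d1 x)); first exact: Gh_mono.
  by apply: ereal_sup_ubound; exists N.
near=> d; rewrite innerE; apply: Fle.
by near: d; exact: nbhs_right_gt.
Unshelve. all: by end_near. Qed.

End GhLemmas.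


Section Construction.
Context {R : realType} {T : pseudoMetricType R} (h : nat -> T -> \bar R) (K : R).

Definition rr (m : nat) : R := (m.+1%:R)^-1.
Definition cc (m : nat) : R := (m.+1%:R * m.+1%:R)%R.

Lemma rr_gt0 m : (0 < rr m)%R.
Proof. by rewrite /rr invr_gt0 ltr0n. Qed.

Lemma cc_gt0 m : (0 < cc m)%R.
Proof. by rewrite /cc mulr_gt0 // ltr0n. Qed.

Lemma ccrr m : (cc m * rr m = m.+1%:R)%R.
Proof. by rewrite /cc /rr mulfK // pnatr_eq0. Qed.

Lemma shift_ge0 (u : \bar R) : (- K)%:E <= u -> 0 <= u + K%:E.
Proof.
case: u => [u| |] //= hu.
- by rewrite -EFinD lee_fin; move: hu; rewrite lee_fin => hu; lra.
- by rewrite leey.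
Qed.

Definition aa m (y : T) : \bar R :=
  mine (maxe (Gh h m (rr m) y) (- K%:E) + K%:E) (m.+1%:R)%:E.

Definition psi m (x : T) : \bar R :=
  ereal_inf [set aa m q.1 + (cc m * q.2)%:E | q in
     [set q : T * R | (0 < q.2)%R /\ ball x q.2 q.1]].

Lemma max_ge0 (u : \bar R) : 0 <= maxe u (- K%:E) + K%:E.
Proof. by apply: shift_ge0; rewrite le_max lexx orbT. Qed.

Lemma aa_ge0 m y : 0 <= aa m y.
Proof. by rewrite /aa le_min max_ge0 lee_fin ler0n. Qed.

Lemma aa_le m y : aa m y <= (m.+1%:R)%:E.
Proof. by rewrite /aa ge_min lexx orbT. Qed.

Lemma aa_mono m y : aa m y <= aa m.+1 y.
Proof.
rewrite /aa; apply: le_min2; last by rewrite lee_fin ler_nat.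
apply: leeD2r; apply: le_max2 => //; apply: Gh_mono => //.
by rewrite /rr lef_pV2 ?posrE ?ltr0n // ler_nat.
Qed.

Lemma psi_lb m x :
  mine (maxe (Gh h m (2 * rr m) x) (- K%:E) + K%:E) (m.+1%:R)%:E <= psi m x.
Proof.
apply: le_ereal_inf_tmp => _ [[y s] [/= s0 bxy] <-].
have cs0 : (0 <= cc m * s)%R by rewrite mulr_ge0 // ltW // cc_gt0.
have [hs|hs] := ltP s (rr m).
- apply: (@le_trans _ _ (aa m y)); last by rewrite leeDl // lee_fin.
  rewrite /aa; apply: le_min2 => //; apply: leeD2r; apply: le_max2 => //.
  apply: le_ereal_inf => _ [p [Np bp] <-]; exists p => //; split => //.
  apply: (@le_ball _ _ _ (s + rr m)%R); last exact: ball_triangle bxy bp.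
  by rewrite mulr2n mulrDl mul1r lerD2r ltW.
- rewrite ge_min; apply/orP; right.
  apply: (@le_trans _ _ (cc m * s)%:E); last first.
    by rewrite -[X in X <= _]add0e leeD2r // aa_ge0.
  by rewrite lee_fin -ccrr ler_wpM2l // ltW // cc_gt0.
Qed.

Lemma psi_ge0 m x : 0 <= psi m x.
Proof.
apply: le_trans (psi_lb m x); by rewrite le_min max_ge0 lee_fin ler0n.
Qed.

Lemma psi_le_aa m x : psi m x <= aa m x.
Proof.
apply/lee_addgt0Pr => e e0.
apply: (@le_trans _ _ (aa m x + (cc m * (e / cc m))%:E)).
  apply: ereal_inf_lbound; exists (x, (e / cc m)%R) => //; split => /=.
    by rewrite divr_gt0 // cc_gt0.
  by apply: ballxx; rewrite divr_gt0 // cc_gt0.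
by rewrite mulrC divfK // gt_eqF // cc_gt0.
Qed.

Lemma psi_fin m x : psi m x \is a fin_num.
Proof.
rewrite ge0_fin_numE ?psi_ge0 //.
by apply: le_lt_trans (psi_le_aa m x) _; apply: le_lt_trans (aa_le m x) _;
  rewrite ltry.
Qed.

Definition phi m x : R := fine (psi m x).

Lemma phiE m x : (phi m x)%:E = psi m x.
Proof. by rewrite fineK // psi_fin. Qed.

Lemma psi_lip m x x' s : (0 < s)%R -> ball x s x' ->
  psi m x' <= psi m x + (cc m * s)%:E.
Proof.
move=> s0 bxx'; rewrite -leeBlDr //; apply: le_ereal_inf_tmp.
move=> _ [[y r] [/= r0 bxy] <-]; rewrite EFinN leeBlDr //.
apply: (@le_trans _ _ (aa m y + (cc m * (s + r))%:E)).
  apply: ereal_inf_lbound; exists (y, (s + r)%R) => //; split => /=.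
    by rewrite addr_gt0.
  exact: ball_triangle (ball_sym bxx') bxy.
by rewrite mulrDr EFinD addeA addeAC.
Qed.

Lemma phi_lip m x x' s : (0 < s)%R -> ball x s x' ->
  (`|phi m x - phi m x'| <= cc m * s)%R.
Proof.
move=> s0 bxx'; rewrite ler_norml; apply/andP; split.
- have := @psi_lip m x x' s s0 bxx'; rewrite -!phiE -EFinD lee_fin => H.
  lra.
- have := @psi_lip m x' x s s0 (ball_sym bxx'); rewrite -!phiE -EFinD lee_fin => H.
  lra.
Qed.

Lemma phi_cont m : continuous (phi m).
Proof.
move=> x; apply/cvgrPdist_lt => e e0.
have s0 : (0 < e / (2 * cc m))%R by rewrite divr_gt0 // mulr_gt0 // cc_gt0.
near=> x'.
have bxx' : ball x (e / (2 * cc m))%R x' by near: x'; exact: nbhsx_ballx.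
apply: le_lt_trans (@phi_lip m x x' _ s0 bxx') _.
have cm0 : cc m != 0%R by rewrite gt_eqF // cc_gt0.
have -> : (cc m * (e / (2 * cc m)) = e / 2)%R by field; rewrite cm0.
lra.
Unshelve. all: by end_near. Qed.

Lemma phi_bound m x : (`|phi m x| <= m.+1%:R)%R.
Proof.
have : (0 <= phi m x)%R by rewrite -lee_fin phiE psi_ge0.
move=> /ger0_norm ->; rewrite -lee_fin phiE.
exact: le_trans (psi_le_aa m x) (aa_le m x).
Qed.

Lemma psi_mono m x : psi m x <= psi m.+1 x.
Proof.
apply: le_ereal_inf_tmp => _ [[y s] [/= s0 bxy] <-].
apply: (@le_trans _ _ (aa m y + (cc m * s)%:E)).
  by apply: ereal_inf_lbound; exists (y, s).
apply: leeD; first exact: aa_mono.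
rewrite lee_fin ler_wpM2r // ?ltW // /cc.
by rewrite -!natrM ltr_nat ltn_mul.
Qed.

Lemma psi_nd x : {homo (fun m => psi m x) : n m / (n <= m)%N >-> n <= m}.
Proof. by apply/nondecreasing_seqP => m; exact: psi_mono. Qed.

Definition Phi x : \bar R := limn (fun m => psi m x).

Lemma PhiE x : Phi x = ereal_sup (range (fun m => psi m x)).
Proof. by apply: cvg_lim => //; apply: ereal_nondecreasing_cvgn; exact: psi_nd. Qed.

Lemma psi_le_Phi m x : psi m x <= Phi x.
Proof. by rewrite PhiE; apply: ereal_sup_ubound; exists m. Qed.

Lemma Phi_ge0 x : 0 <= Phi x.
Proof. exact: le_trans (psi_ge0 0 x) (psi_le_Phi 0 x). Qed.

Lemma Phi_ge x : maxe (joint_liminf h x) (- K%:E) + K%:E <= Phi x.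
Proof.
have hs d : (0 < d)%R -> exists M, forall m, (M <= m)%N -> (2 * rr m <= d)%R.
  move=> d0; have d20 : (0 < d / 2)%R by rewrite divr_gt0.
  have [M _ HM] := near_infty_natSinv_lt (PosNum d20).
  exists M => m Mm; have := HM m Mm; rewrite /= => /ltW.
  by rewrite -/(rr m) ler_pdivlMr // mulrC.
apply: (@le_trans _ _ (maxe (ereal_sup (range (fun m => Gh h m (2 * rr m) x)))
   (- K%:E) + K%:E)).
  by apply: leeD2r; apply: le_max2 => //; exact: jl_le_S.
set S := ereal_sup _.
apply: lee_real => t ht.
have [t0|t0] := ltP t 0%R.
  by apply: le_trans (Phi_ge0 x); rewrite lee_fin ltW.
have : (t - K)%:E < maxe S (- K%:E).
  by rewrite EFinB lteBlDr.
rewrite lt_max => /orP[|]; last first.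
  by rewrite -EFinN lte_fin ltrBlDr addNr => /(le_lt_trans t0); rewrite ltxx.
move=> /ereal_sup_gt[_ [m0 _ <-] hm0].
pose m := maxn m0 (Num.trunc t).
apply: (@le_trans _ _ (psi m x)); last exact: psi_le_Phi.
apply: le_trans (psi_lb m x); apply: ltW; rewrite lt_min; apply/andP; split.
- rewrite -lteBlDr // -EFinB; apply: lt_le_trans hm0 _.
  apply: le_trans (_ : Gh h m (2 * rr m) x <= _); last first.
    by rewrite le_max lexx.
  apply: Gh_mono; first exact: leq_maxl.
  rewrite ler_pM2l // /rr lef_pV2 ?posrE ?ltr0n // ler_nat ltnS.
  exact: leq_maxl.
- rewrite lte_fin; apply: lt_le_trans (truncnS_gt t) _.
  by rewrite ler_nat ltnS leq_maxr.
Qed.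

End Construction.


Section Meas.
Context {R : realType}.

Lemma cont_meas (T : pseudoPMetricType R) (f : T -> R) :
  continuous f -> measurable_fun [set: borelType T] f.
Proof.
move=> cf.
apply: (@measurability _ _ (borelType T) R setT f (RGenOInfty.G (R:=R)) (RGenOInfty.measurableE R)).
move=> _ [_ [a ->] <-]; rewrite setTI.
apply: sub_sigma_algebra; apply: open_comp; last exact: rray_open.
by move=> y _; exact: cf.
Qed.

Lemma int_bounded_fin d (T : measurableType d) (P : probability T R)
  (f : T -> \bar R) (K : R) : (forall x, 0 <= f x) -> (forall x, f x <= K%:E) ->
  \int[P]_x f x \is a fin_num.
Proof.
move=> f0 fK; rewrite ge0_fin_numE ?integral_ge0 //.
apply: le_lt_trans (_ : _ <= K%:E) _; last exact: ltry.
apply: le_trans (@le_int_nm _ _ _ P f (cst K%:E) f0 fK) _.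
by rewrite integral_cst // [X in _ * X](_ : _ = 1) ?mule1 //; exact: probability_setT.
Qed.

Lemma Eexp_le d (T : measurableType d) (mu : {measure set T -> \bar R})
  (f g : T -> \bar R) : (forall x, f x <= g x) ->
  \int[mu]_x g^\- x \is a fin_num -> Eexp mu f <= \int[mu]_x g x.
Proof.
move=> fg gfin.
have le1 : \int[mu]_x f^\+ x <= \int[mu]_x g^\+ x.
  apply: le_int_nm => x; first exact: funepos_ge0.
  by rewrite !funeposE; apply: le_max2 => //; exact: fg.
have le2 : \int[mu]_x g^\- x <= \int[mu]_x f^\- x.
  apply: le_int_nm => x; first exact: funeneg_ge0.
  by rewrite !funenegE; apply: le_max2 => //; rewrite leeN2; exact: fg.
rewrite /Eexp [X in _ <= X]integralE; case: ifPn => [/eqP fy|_]; last exact: leeB le1 le2.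
move: le1; rewrite fy leye_eq => /eqP ->; rewrite addye ?leey //.
by move: gfin; rewrite -fin_numN fin_numE => /andP[].
Qed.

Lemma int_shift d (T : measurableType d) (P : probability T R) (Y : T -> \bar R)
  (K : R) : (0 <= K)%R -> measurable_fun setT Y -> (forall x, (- K)%:E <= Y x) ->
  \int[P]_x (Y x + K%:E) = \int[P]_x Y x + K%:E.
Proof.
move=> K0 mY YK.
have Yneg x : Y^\- x <= K%:E.
  rewrite funenegE ge_max; apply/andP; split; last by rewrite lee_fin.
  by rewrite leeNl -EFinN; exact: YK.
have Bfin : \int[P]_x Y^\- x \is a fin_num.
  exact: (@int_bounded_fin _ _ P _ K (funeneg_ge0 Y) Yneg).
have Kint : \int[P]_x (cst K%:E) x = K%:E.
  by rewrite integral_cst // [X in _ * X](_ : _ = 1) ?mule1 //; exact: probability_setT.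
have YK0 x : 0 <= Y x + K%:E.
  have := YK x; case: (Y x) => [y| |] //= hy.
  - by rewrite -EFinD lee_fin; move: hy; rewrite lee_fin => hy; lra.
  - by rewrite leey.
have pt x : Y x + K%:E + Y^\- x = Y^\+ x + cst K%:E x.
  rewrite funeposE funenegE /=; have := YK x; case: (Y x) => [y| |] hy.
  - have [y0|y0] := leP y 0%R.
    + rewrite (_ : maxe y%:E 0 = 0); last by apply/max_idPr; rewrite lee_fin.
      rewrite (_ : maxe (- y%:E) 0 = (- y)%:E); last first.
        by apply/max_idPl; rewrite lee_fin oppr_ge0.
      by rewrite -!EFinD; congr (_%:E); ring.
    + rewrite (_ : maxe y%:E 0 = y%:E); last by apply/max_idPl; rewrite lee_fin ltW.
      rewrite (_ : maxe (- y%:E) 0 = 0); last first.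
        by apply/max_idPr; rewrite lee_fin oppr_le0 ltW.
      by rewrite adde0 addeC.
  - rewrite (_ : maxe (- +oo) 0 = 0); last by apply/max_idPr; exact: leNye.
    rewrite (_ : maxe +oo 0 = +oo); last by apply/max_idPl; exact: leey.
    by rewrite adde0.
  - by move: hy; rewrite leeNy_eq.
have E : \int[P]_x (Y x + K%:E) + \int[P]_x Y^\- x =
    \int[P]_x Y^\+ x + K%:E.
  rewrite -ge0_integralD //; [|by apply: emeasurable_funD => //; exact: measurable_cst|exact: measurable_funeneg].
  rewrite (eq_integral (fun x => Y^\+ x + cst K%:E x)); last by move=> x _; exact: pt.
  by rewrite ge0_integralD // ?Kint //; exact: measurable_funepos.
rewrite -[LHS](addeK _ Bfin) E.
rewrite [\int[P]_x Y x]integralE.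
by rewrite addeAC.
Qed.

Lemma Eexp_split d (T : measurableType d) (P : probability T R)
  (f : T -> \bar R) (K : R) : (0 <= K)%R -> measurable_fun setT f ->
  \int[P]_x maxe (f x) (- K%:E) +
  Eexp P (fun x => f x * (\1_[set y | (f y <= - K%:E)%E] x)%:E) <= Eexp P f.
Proof.
move=> K0 mf.
set u := fun x => maxe (f x) (- K%:E).
set v := fun x => f x * (\1_[set y | (f y <= - K%:E)%E] x)%:E.
have vE x : v x = if f x <= - K%:E then f x else 0.
  rewrite /v indicE; case: ifPn => hx.
    by rewrite mem_set //= mule1.
  by rewrite memNset /= ?mule0 //; apply/negP.
have K0' : - K%:E <= 0 by rewrite -EFinN lee_fin oppr_le0.
have pv x : v^\+ x = 0.
  rewrite funeposE vE; case: ifPn => hx; first by apply/max_idPr; exact: le_trans hx K0'.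
  by rewrite maxxx.
have pu x : u^\+ x = f^\+ x.
  by rewrite !funeposE /u -maxA (_ : maxe (- K%:E) 0 = 0) //; exact/max_idPr.
have pn x : f^\- x <= u^\- x + v^\- x.
  rewrite [X in _ <= _ + X]funenegE vE; case: ifPn => hx.
    by rewrite funenegE leeDr // funeneg_ge0.
  rewrite oppe0 maxxx adde0.
  rewrite !funenegE /u (_ : maxe (f x) (- K%:E) = f x) //.
  by apply/max_idPl; rewrite ltW // ltNge.
have ufin : \int[P]_x u^\- x \is a fin_num.
  apply: (@int_bounded_fin _ _ P _ K) => x; first exact: funeneg_ge0.
  rewrite funenegE ge_max lee_fin K0 andbT leeNl -EFinN.
  by rewrite /u le_max lexx orbT.
have mu_ : measurable_fun setT u by apply: measurable_maxe => //; exact: measurable_cst.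
have mv : measurable_fun setT v.
  apply: emeasurable_funM => //; apply/measurable_EFinP.
  apply: measurable_indic; rewrite -[X in measurable X]setTI.
  by apply: measurable_lee => //; exact: measurable_cst.
have le : \int[P]_x f^\- x <= \int[P]_x u^\- x + \int[P]_x v^\- x.
  rewrite -ge0_integralD //; [|exact: measurable_funeneg|exact: measurable_funeneg].
  by apply: le_int_nm; [exact: funeneg_ge0|exact: pn].
have Ev : Eexp P v = - \int[P]_x v^\- x.
  rewrite /Eexp (eq_integral (cst 0)); last by move=> x _; exact: pv.
  by rewrite integral0 /= sub0e.
rewrite Ev /Eexp; case: ifPn => [_|_]; first exact: leey.
rewrite [\int[P]_x u x]integralE [\int[P]_x u^\+ x](eq_integral (fun x => f^\+ x)); last by move=> x _; exact: pu.
rewrite -addeA -oppeD; last exact: fin_num_adde_defr.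
exact: leeB.
Qed.

End Meas.


Section Port.
Context {R : realType} {T : pseudoPMetricType R}
  (P_ : nat -> probability (borelType T) R) (P : probability (borelType T) R)
  (hweak : forall phi : T -> R, continuous phi ->
      (exists M : R, forall x, (`|phi x| <= M)%R) ->
      (\int[P_ n]_x (phi x)%:E) @[n --> \oo] --> \int[P]_x (phi x)%:E)
  (h : nat -> borelType T -> \bar R) (K : R).

Lemma psi_le_w m n x : (m <= n)%N ->
  psi h K m x <= maxe (h n x) (- K%:E) + K%:E.
Proof.
move=> mn; apply: le_trans (psi_le_aa h K m x) _.
rewrite /aa ge_min; apply/orP; left; apply: leeD2r; apply: le_max2 => //.
by apply: Gh_le_h => //; exact: rr_gt0.
Qed.

Lemma int_phi_le m : \int[P]_x (phi h K m x)%:E <=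
  limn_einf (fun n => \int[P_ n]_x (maxe (h n x) (- K%:E) + K%:E)).
Proof.
have cv := hweak (phi h K m) (@phi_cont _ _ h K m) (ex_intro _ m.+1%:R (phi_bound h K m)).
rewrite -(cvg_limn_einf_sup cv).1; apply: le_limn_einf_near; near=> n.
apply: le_int_nm => x; rewrite phiE; first exact: psi_ge0.
by apply: psi_le_w; near: n; exact: nbhs_infty_ge.
Unshelve. all: by end_near. Qed.

Lemma psi_meas m : measurable_fun setT (fun x : borelType T => psi h K m x).
Proof.
have -> : (fun x : borelType T => psi h K m x) = EFin \o phi h K m.
  by apply/funext => x; rewrite /= phiE.
by apply/measurable_EFinP; apply: cont_meas; exact: phi_cont.
Qed.

Lemma Phi_meas : measurable_fun setT (Phi h K : borelType T -> \bar R).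
Proof.
apply: (@emeasurable_fun_cvg _ (borelType T) R setT (fun m x => psi h K m x) (Phi h K)); first exact: psi_meas.
move=> x _; rewrite PhiE; apply: ereal_nondecreasing_cvgn; exact: psi_nd.
Qed.

Lemma int_Phi_le : \int[P]_x Phi h K x <=
  limn_einf (fun n => \int[P_ n]_x (maxe (h n x) (- K%:E) + K%:E)).
Proof.
rewrite /Phi (@monotone_convergence _ _ _ P setT measurableT
   (fun m x => psi h K m x)) //; last 3 first.
- by move=> n; exact: psi_meas.
- by move=> n x _; exact: psi_ge0.
- by move=> x _; exact: psi_nd.
apply: lime_le.
  apply: ereal_nondecreasing_is_cvgn => a b ab.
  by apply: le_int_nm => x; [exact: psi_ge0|exact: psi_nd].
apply: nearW => m; rewrite (eq_integral (fun x : borelType T => (phi h K m x)%:E : \bar R)).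
  exact: int_phi_le.
by move=> x _; rewrite phiE.
Qed.

End Port.


Theorem theorem3p4 (R : realType) (T : pseudoPMetricType R)
  (hT : hausdorff_space T)
  (P_ : nat -> probability (borelType T) R) (P : probability (borelType T) R)
  (hweak : forall phi : T -> R, continuous phi ->
      (exists M : R, forall x, (`|phi x| <= M)%R) ->
      (\int[P_ n]_x (phi x)%:E) @[n --> \oo] --> \int[P]_x (phi x)%:E)
  (h : nat -> borelType T -> \bar R)
  (hmeas : forall n, measurable_fun setT (h n))
  (hunif : limf_einf (fun K : R =>
              limn_einf (fun n => Eexp (P_ n)
                (fun x => h n x * (\1_[set y | (h n y <= - K%:E)%E] x)%:E)))
            (@pinfty_nbhs R) = 0) :
  limn_einf (fun n => Eexp (P_ n) (h n)) >= Eexp P (joint_liminf (T:=T) h).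
Proof.
set L := limn_einf _.
apply/lee_addgt0Pr => e e0.
have : (- e)%:E < limf_einf (fun K : R =>
              limn_einf (fun n => Eexp (P_ n)
                (fun x => h n x * (\1_[set y | (h n y <= - K%:E)%E] x)%:E)))
            (@pinfty_nbhs R).
  by rewrite hunif lte_fin oppr_lt0.
rewrite limf_einfE => /ereal_sup_gt[_ [A [M [Mr HM]] <-] hA].
pose K := (`|M| + 1)%R.
have nM := normr_ge0 M; have lM := ler_norm M.
have K0 : (0 < K)%R by rewrite /K; lra.
have MK : (M < K)%R by rewrite /K; lra.
have hV : (- e)%:E < limn_einf (fun n => Eexp (P_ n)
                (fun x => h n x * (\1_[set y | (h n y <= - K%:E)%E] x)%:E)).
  by apply: lt_le_trans hA _; apply: ereal_inf_lbound; exists K => //; exact: HM.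
move: hV; set V := (fun n => Eexp (P_ n) _).
rewrite limn_einf_lim.
have -> : limn (einfs V) = ereal_sup (range (einfs V)).
  by apply/cvg_lim => //; exact: cvg_einfs_sup.
move=> /ereal_sup_gt[_ [m0 _ <-] hm0].
have hVn n : (m0 <= n)%N -> (- e)%:E < V n.
  move=> mn; apply: lt_le_trans hm0 _; apply: ereal_inf_lbound; exists n => //.
set W := fun n => \int[P_ n]_x (maxe (h n x) (- K%:E) + K%:E).
have LW : (- (K + e))%:E + limn_einf W <= L.
  rewrite -limn_einf_shift //; apply: le_limn_einf_near.
  near=> n.
  have hn : (m0 <= n)%N by near: n; exact: nbhs_infty_ge.
  rewrite /W int_shift //; [|exact: ltW|by apply: measurable_maxe => //; exact: measurable_cst|by move=> x; rewrite le_max lexx orbT].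
  apply: (le_trans _ (@Eexp_split _ _ _ (P_ n) (h n) K (ltW K0) (hmeas n))).
  rewrite addeCA -EFinD (_ : (- (K + e) + K = - e)%R); last by ring.
  by apply: leeD2l; exact: ltW (hVn n hn).
pose Y : borelType T -> \bar R := fun x => Phi h K x - K%:E.
have YK x : (- K)%:E <= Y x.
  by rewrite /Y leeBrDr // -EFinD addNr; exact: Phi_ge0.
have mY : measurable_fun setT Y.
  by apply: emeasurable_funB => //; exact: Phi_meas.
have IY : \int[P]_x Y x + K%:E = \int[P]_x Phi h K x.
  rewrite -int_shift //; [|exact: ltW].
  by apply: eq_integral => x _; rewrite /Y subeK.
have gY x : joint_liminf (T:=T) h x <= Y x.
  rewrite /Y leeBrDr //; apply: le_trans (Phi_ge h K x); apply: leeD2r.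
  by rewrite le_max lexx.
have Yfin : \int[P]_x Y^\- x \is a fin_num.
  apply: (@int_bounded_fin _ _ _ P _ K) => x; first exact: funeneg_ge0.
  rewrite funenegE ge_max lee_fin (ltW K0) andbT leeNl -EFinN; exact: YK.
apply: (le_trans (@Eexp_le _ _ _ P _ Y gY Yfin)).
rewrite -leeBlDr //; apply: le_trans LW.
apply: (@le_trans _ _ ((- (K + e))%:E + \int[P]_x Phi h K x)); last first.
  by apply: leeD2l; exact: int_Phi_le.
rewrite -IY addeCA -EFinD (_ : (- (K + e) + K = - e)%R); last by ring.
by rewrite EFinN.
Unshelve. all: by end_near. Qed.
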